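(* Let $\Delta$ be a mesh. If a pair $(A,B)$ of functions on $\Delta$ is a discrete imprecise copula, then $(A^{\mathrm{BL}},B^{\mathrm{BL}})$ is an imprecise copula. Conversely, if $(A,B)$ is an imprecise copula on $[0,1]^2$, then $(A|_\Delta,B|_\Delta)$ is a discrete imprecise copula.
   Context: A mesh is $\Delta=\delta_x\times\delta_y$ with $\delta_x=\{0=x_0<\dots<x_p=1\}$, $\delta_y=\{0=y_0<\dots<y_q=1\}$. For a 1-increasing (nondecreasing in each variable) function $A$ on $\Delta$, $A^{\mathrm{BL}}$ is the function on $[0,1]^2$ which on each cell $[x_{i-1},x_i]\times[y_{j-1},y_j]$ is the bilinear interpolation (affine in each variable separately) of the corner values. Let $\mathbb{D}$ be $[0,1]^2$ or a mesh. A pair $(A,B)$ of functions $\mathbb{D}\to\mathbb{R}$ is an imprecise copula (called a discrete imprecise copula if $\mathbb{D}$ is a mesh) if both are grounded ($A(x,0)=A(0,y)=0$ for points in $\mathbb{D}$), both have $1$ as neutral element ($A(x,1)=x$, $A(1,y)=y$ for points in $\mathbb{D}$), and for every rectangle with corners in $\mathbb{D}$, with southwest corner $\mathbf{a}$, southeast $\mathbf{b}$, northeast $\mathbf{c}$, northwest $\mathbf{d}$: (IC1) $A(\mathbf{a})+B(\mathbf{c})-A(\mathbf{b})-A(\mathbf{d})\ge0$; (IC2) $B(\mathbf{a})+A(\mathbf{c})-A(\mathbf{b})-A(\mathbf{d})\ge0$; (IC3) $B(\mathbf{a})+B(\mathbf{c})-B(\mathbf{b})-A(\mathbf{d})\ge0$;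 (IC4) $B(\mathbf{a})+B(\mathbf{c})-A(\mathbf{b})-B(\mathbf{d})\ge0$. For an imprecise copula, $A$ and $B$ are quasi-copulas (discrete quasi-copulas in the mesh case), hence 1-increasing, and $A\le B$. *)

(* Defs.v *)
From Stdlib Require Import Reals Lra Lia.
Open Scope R_scope.

Definition is_partition (p : nat) (xs : nat -> R) : Prop :=
  xs 0%nat = 0 /\ xs p = 1 /\ (forall i : nat, (i < p)%nat -> xs i < xs (S i)).

(** Imprecise copula on [0,1]^2 (functions R -> R -> R; only values on [0,1]^2 matter). *)
Definition imprecise_copula (A B : R -> R -> R) : Prop :=
  (forall x : R, 0 <= x <= 1 ->
     A x 0 = 0 /\ A 0 x = 0 /\ B x 0 = 0 /\ B 0 x = 0 /\
     A x 1 = x /\ A 1 x = x /\ B x 1 = x /\ B 1 x = x) /\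
  (forall x1 x2 y1 y2 : R,
     0 <= x1 -> x1 <= x2 -> x2 <= 1 -> 0 <= y1 -> y1 <= y2 -> y2 <= 1 ->
     (* a = (x1,y1) SW, b = (x2,y1) SE, c = (x2,y2) NE, d = (x1,y2) NW *)
     A x1 y1 + B x2 y2 - A x2 y1 - A x1 y2 >= 0 /\
     B x1 y1 + A x2 y2 - A x2 y1 - A x1 y2 >= 0 /\
     B x1 y1 + B x2 y2 - B x2 y1 - A x1 y2 >= 0 /\
     B x1 y1 + B x2 y2 - A x2 y1 - B x1 y2 >= 0).

(** Discrete imprecise copula on the mesh {xs i | i <= p} x {ys j | j <= q};
    a function on the mesh is given by its values A i j = A(xs i, ys j). *)
Definition discrete_imprecise_copula (p q : nat) (xs ys : nat -> R)
    (A B : nat -> nat -> R) : Prop :=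
  (forall i : nat, (i <= p)%nat ->
     A i 0%nat = 0 /\ B i 0%nat = 0 /\ A i q = xs i /\ B i q = xs i) /\
  (forall j : nat, (j <= q)%nat ->
     A 0%nat j = 0 /\ B 0%nat j = 0 /\ A p j = ys j /\ B p j = ys j) /\
  (forall i1 i2 j1 j2 : nat,
     (i1 <= i2)%nat -> (i2 <= p)%nat -> (j1 <= j2)%nat -> (j2 <= q)%nat ->
     A i1 j1 + B i2 j2 - A i2 j1 - A i1 j2 >= 0 /\
     B i1 j1 + A i2 j2 - A i2 j1 - A i1 j2 >= 0 /\
     B i1 j1 + B i2 j2 - B i2 j1 - A i1 j2 >= 0 /\
     B i1 j1 + B i2 j2 - A i2 j1 - B i1 j2 >= 0).

Fixpoint count_le (xs : nat -> R) (x : R) (n : nat) : nat :=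
  match n with
  | O => O
  | S m => (count_le xs x m + if Rle_dec (xs (S m)) x then 1 else 0)%nat
  end.

(** Index i in 0..p-1 of a cell [xs i, xs (i+1)] containing x (for x in [0,1]). *)
Definition cell_index (p : nat) (xs : nat -> R) (x : R) : nat :=
  count_le xs x (p - 1).

Definition BL (p q : nat) (xs ys : nat -> R) (A : nat -> nat -> R) (x y : R) : R :=
  let i := cell_index p xs x in
  let j := cell_index q ys y in
  let t := (x - xs i) / (xs (S i) - xs i) in
  let s := (y - ys j) / (ys (S j) - ys j) in
  (1 - t) * (1 - s) * A i j + t * (1 - s) * A (S i) j
  + (1 - t) * s * A i (S j) + t * s * A (S i) (S j).

(* Main.v *)
Require Import Defs.
From Stdlib Require Import Reals Lra Lia.
Open Scope R_scope.

Lemma part_p_pos p xs : is_partition p xs -> (0 < p)%nat.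
Proof. intros [H0 [H1 _]]. destruct p; [rewrite H0 in H1; lra | lia]. Qed.

Lemma part_mono p xs : is_partition p xs ->
  forall i j, (i <= j)%nat -> (j <= p)%nat -> xs i <= xs j.
Proof.
  intros H i j; induction j; intros Hij Hj.
  - replace i with 0%nat by lia; lra.
  - destruct (Nat.eq_dec i (S j)) as [e|ne]; [subst; lra|].
    assert (xs i <= xs j) by (apply IHj; lia).
    destruct H as [_ [_ Hs]]. assert (xs j < xs (S j)) by (apply Hs; lia). lra.
Qed.

Lemma part_smono p xs : is_partition p xs ->
  forall i j, (i < j)%nat -> (j <= p)%nat -> xs i < xs j.
Proof.
  intros H i j Hij Hj.
  assert (xs (S i) <= xs j) by (apply (part_mono p xs H); lia).
  destruct H as [_ [_ Hs]]. assert (xs i < xs (S i)) by (apply Hs; lia). lra.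
Qed.

Lemma count_spec p xs x : is_partition p xs -> 0 <= x -> forall n, (n < p)%nat ->
  (count_le xs x n <= n)%nat /\ xs (count_le xs x n) <= x /\
  ((count_le xs x n < n)%nat -> x < xs (S (count_le xs x n))).
Proof.
  intros H hx0; induction n; intros Hn.
  - simpl. destruct H as [H0 _]. split; [lia|split;[lra|lia]].
  - destruct IHn as [Hc1 [Hc2 Hc3]]; [lia|]. simpl.
    destruct (Rle_dec (xs (S n)) x) as [r|r].
    + assert (E : count_le xs x n = n).
      { destruct (Nat.lt_ge_cases (count_le xs x n) n) as [l|l]; [|lia].
        exfalso. specialize (Hc3 l).
        assert (xs (S (count_le xs x n)) <= xs (S n)) by (apply (part_mono p xs H); lia).
        lra. }
      rewrite E, Nat.add_1_r. split;[lia|split;[lra|lia]].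
    + rewrite Nat.add_0_r. split;[lia|split;[lra|]]. intros.
      destruct (Nat.lt_ge_cases (count_le xs x n) n) as [l|l].
      * apply Hc3; auto.
      * replace (count_le xs x n) with n by lia. lra.
Qed.

Lemma cell_spec p xs x : is_partition p xs -> 0 <= x <= 1 ->
  (cell_index p xs x < p)%nat /\ xs (cell_index p xs x) <= x <= xs (S (cell_index p xs x)).
Proof.
  intros H hx. pose proof (part_p_pos p xs H) as Hp. unfold cell_index.
  destruct (count_spec p xs x H ltac:(lra) (p-1) ltac:(lia)) as [Hc1 [Hc2 Hc3]].
  split; [lia|split;[lra|]].
  destruct (Nat.lt_ge_cases (count_le xs x (p-1)) (p-1)) as [l|l].
  - left; apply Hc3; auto.
  - replace (S (count_le xs x (p-1))) with p by lia. destruct H as [_ [H1 _]]. lra.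
Qed.

Lemma count_mono xs x y n : x <= y -> (count_le xs x n <= count_le xs y n)%nat.
Proof.
  intros Hxy; induction n; simpl; [lia|].
  destruct (Rle_dec (xs (S n)) x); destruct (Rle_dec (xs (S n)) y); try lia.
  exfalso; lra.
Qed.

Definition lin (n : nat) (xs : nat -> R) (f : nat -> R) (x : R) : R :=
  let i := cell_index n xs x in
  let t := (x - xs i) / (xs (S i) - xs i) in
  (1 - t) * f i + t * f (S i).

Lemma frac_bounds a b x : a < b -> a <= x <= b -> 0 <= (x-a)/(b-a) <= 1.
Proof.
  intros. split.
  - apply Rmult_le_pos; [lra| left; apply Rinv_0_lt_compat; lra].
  - apply Rmult_le_reg_r with (b-a); [lra|]. unfold Rdiv.
    rewrite Rmult_assoc, Rinv_l; lra.
Qed.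

Lemma key_arith (f g : nat -> R) i k t s : (i <= k)%nat -> 0<=t<=1 -> 0<=s<=1 ->
  (i = k -> t <= s) ->
  (forall i1 i2, (i1 <= i2)%nat -> (i2 <= S k)%nat -> f i1 + g i2 >= 0) ->
  (1-t)*f i + t*f (S i) + ((1-s)*g k + s*g (S k)) >= 0.
Proof.
  intros Hik Ht Hs Hts H.
  destruct (Nat.eq_dec i k) as [e|ne].
  - specialize (Hts e). subst.
    pose proof (H k k ltac:(lia) ltac:(lia)).
    pose proof (H k (S k) ltac:(lia) ltac:(lia)).
    pose proof (H (S k) (S k) ltac:(lia) ltac:(lia)).
    replace ((1-t)*f k + t*f (S k) + ((1-s)*g k + s*g (S k))) with
      ((1-s)*(f k+g k) + (s-t)*(f k + g (S k)) + t*(f (S k)+g (S k))) by ring.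
    apply Rle_ge; repeat apply Rplus_le_le_0_compat; apply Rmult_le_pos; lra.
  - pose proof (H i k ltac:(lia) ltac:(lia)).
    pose proof (H i (S k) ltac:(lia) ltac:(lia)).
    pose proof (H (S i) k ltac:(lia) ltac:(lia)).
    pose proof (H (S i) (S k) ltac:(lia) ltac:(lia)).
    replace ((1-t)*f i + t*f (S i) + ((1-s)*g k + s*g (S k))) with
      ((1-t)*(1-s)*(f i+g k) + (1-t)*s*(f i + g (S k)) + t*(1-s)*(f (S i)+g k)
       + t*s*(f (S i)+g (S k))) by ring.
    apply Rle_ge; repeat apply Rplus_le_le_0_compat; apply Rmult_le_pos;
      try apply Rmult_le_pos; lra.
Qed.

Lemma lin_key p xs f g : is_partition p xs ->
  (forall i1 i2, (i1 <= i2)%nat -> (i2 <= p)%nat -> f i1 + g i2 >= 0) ->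
  forall x1 x2, 0 <= x1 -> x1 <= x2 -> x2 <= 1 -> lin p xs f x1 + lin p xs g x2 >= 0.
Proof.
  intros H Hfg x1 x2 h1 h2 h3. unfold lin; cbv zeta.
  destruct (cell_spec p xs x1 H) as [Hi1 Hi2]; [lra|].
  destruct (cell_spec p xs x2 H) as [Hk1 Hk2]; [lra|].
  assert (Hik: (cell_index p xs x1 <= cell_index p xs x2)%nat)
    by (unfold cell_index; apply count_mono; lra).
  assert (di: xs (cell_index p xs x1) < xs (S (cell_index p xs x1)))
    by (destruct H as [_ [_ Hs]]; apply Hs; lia).
  assert (dk: xs (cell_index p xs x2) < xs (S (cell_index p xs x2)))
    by (destruct H as [_ [_ Hs]]; apply Hs; lia).
  apply key_arith.
  - exact Hik.
  - apply frac_bounds; lra.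
  - apply frac_bounds; lra.
  - intros e. rewrite e. unfold Rdiv. apply Rmult_le_compat_r;
      [left; apply Rinv_0_lt_compat; rewrite <- e; lra | lra].
  - intros; apply Hfg; lia.
Qed.

Lemma lin_ext p xs f g x : is_partition p xs -> 0 <= x <= 1 ->
  (forall i, (i <= p)%nat -> f i = g i) -> lin p xs f x = lin p xs g x.
Proof.
  intros H hx Hfg. unfold lin; cbv zeta.
  destruct (cell_spec p xs x H hx) as [Hi _].
  rewrite (Hfg (cell_index p xs x)), (Hfg (S (cell_index p xs x))) by lia. reflexivity.
Qed.

Lemma lin_const p xs c x : lin p xs (fun _ => c) x = c.
Proof. unfold lin; cbv zeta. ring. Qed.

Lemma lin_0 p xs f : is_partition p xs -> lin p xs f 0 = f 0%nat.
Proof.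
  intros H. assert (E : cell_index p xs 0 = 0%nat).
  { destruct (cell_spec p xs 0 H ltac:(lra)) as [Hc1 [Hc2 _]].
    destruct (Nat.eq_dec (cell_index p xs 0) 0) as [e|ne]; auto.
    exfalso. assert (xs 0%nat < xs (cell_index p xs 0)) by (apply (part_smono p xs H); lia).
    destruct H as [Hz _]. lra. }
  unfold lin; cbv zeta. rewrite E. destruct H as [H0 _]. rewrite H0. unfold Rdiv. ring.
Qed.

Lemma lin_1 p xs f : is_partition p xs -> lin p xs f 1 = f p.
Proof.
  intros H. pose proof (part_p_pos p xs H).
  assert (E : cell_index p xs 1 = (p-1)%nat).
  { destruct (cell_spec p xs 1 H ltac:(lra)) as [Hc1 [Hc2 Hc3]].
    destruct (Nat.lt_ge_cases (cell_index p xs 1) (p-1)) as [l|l]; [|lia].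
    exfalso. assert (xs (S (cell_index p xs 1)) < xs p) by (apply (part_smono p xs H); lia).
    destruct H as [_ [Hz _]]. lra. }
  assert (xs (p-1)%nat < xs p) by (apply (part_smono p xs H); lia).
  unfold lin; cbv zeta. rewrite E. replace (S (p-1)) with p by lia.
  destruct H as [_ [Hz _]]. rewrite Hz in *.
  assert (Hd: (1 - xs (p-1)%nat)/(1 - xs (p-1)%nat) = 1) by (field; lra).
  rewrite Hd; ring.
Qed.

Lemma lin_id p xs x : is_partition p xs -> 0 <= x <= 1 -> lin p xs xs x = x.
Proof.
  intros H hx. destruct (cell_spec p xs x H hx) as [Hi _].
  assert (xs (cell_index p xs x) < xs (S (cell_index p xs x)))
    by (destruct H as [_ [_ Hs]]; apply Hs; lia).
  unfold lin; cbv zeta. field. lra.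
Qed.

Lemma BL_eq p q xs ys A x y :
  BL p q xs ys A x y = lin p xs (fun i => lin q ys (A i) y) x.
Proof. unfold BL, lin; cbv beta zeta; ring. Qed.

Lemma BL_bound p q xs ys A : is_partition p xs -> is_partition q ys ->
  (forall i, (i <= p)%nat -> A i 0%nat = 0 /\ A i q = xs i) ->
  (forall j, (j <= q)%nat -> A 0%nat j = 0 /\ A p j = ys j) ->
  forall x, 0 <= x <= 1 ->
  BL p q xs ys A x 0 = 0 /\ BL p q xs ys A 0 x = 0 /\
  BL p q xs ys A x 1 = x /\ BL p q xs ys A 1 x = x.
Proof.
  intros hx hy HA1 HA2 x Hx. rewrite !BL_eq. split; [|split; [|split]].
  - rewrite (lin_ext p xs _ (fun _ => 0)); auto; [apply lin_const|].
    intros i Hi. rewrite lin_0 by auto. apply HA1; auto.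
  - rewrite lin_0 by auto. rewrite (lin_ext q ys _ (fun _ => 0)); auto; [apply lin_const|].
    intros j Hj. apply HA2; auto.
  - rewrite (lin_ext p xs _ xs); auto; [apply lin_id; auto|].
    intros i Hi. rewrite lin_1 by auto. apply HA1; auto.
  - rewrite lin_1 by auto. rewrite (lin_ext q ys _ ys); auto; [apply lin_id; auto|].
    intros j Hj. apply HA2; auto.
Qed.

Lemma BL_rect p q xs ys (A1 A2 A3 A4 : nat -> nat -> R) :
  is_partition p xs -> is_partition q ys ->
  (forall i1 i2 j1 j2, (i1 <= i2)%nat -> (i2 <= p)%nat -> (j1 <= j2)%nat -> (j2 <= q)%nat ->
     A1 i1 j1 + A2 i2 j2 - A3 i2 j1 - A4 i1 j2 >= 0) ->
  forall x1 x2 y1 y2, 0 <= x1 -> x1 <= x2 -> x2 <= 1 -> 0 <= y1 -> y1 <= y2 -> y2 <= 1 ->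
  BL p q xs ys A1 x1 y1 + BL p q xs ys A2 x2 y2 - BL p q xs ys A3 x2 y1
    - BL p q xs ys A4 x1 y2 >= 0.
Proof.
  intros hx hy H x1 x2 y1 y2 h1 h2 h3 h4 h5 h6.
  assert (E : BL p q xs ys A1 x1 y1 + BL p q xs ys A2 x2 y2 - BL p q xs ys A3 x2 y1
    - BL p q xs ys A4 x1 y2 =
    lin p xs (fun i => lin q ys (A1 i) y1 - lin q ys (A4 i) y2) x1 +
    lin p xs (fun i => lin q ys (A2 i) y2 - lin q ys (A3 i) y1) x2)
    by (unfold BL, lin; cbv beta zeta; ring).
  rewrite E. apply lin_key; auto. intros i1 i2 Hi Hi2. cbv beta.
  assert (E2 : lin q ys (A1 i1) y1 - lin q ys (A4 i1) y2 + (lin q ys (A2 i2) y2 - lin q ys (A3 i2) y1)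
    = lin q ys (fun j => A1 i1 j - A3 i2 j) y1 + lin q ys (fun j => A2 i2 j - A4 i1 j) y2)
    by (unfold lin; cbv beta zeta; ring).
  rewrite E2. apply lin_key; auto. intros j1 j2 Hj Hj2.
  pose proof (H i1 i2 j1 j2 Hi Hi2 Hj Hj2). lra.
Qed.

Lemma part_range p xs : is_partition p xs -> forall i, (i <= p)%nat -> 0 <= xs i <= 1.
Proof.
  intros H i Hi. pose proof (part_mono p xs H 0 i ltac:(lia) Hi).
  pose proof (part_mono p xs H i p Hi ltac:(lia)).
  destruct H as [Hz0 [Hz1 _]]. lra.
Qed.

Theorem mainTheorem5 (p q : nat) (xs ys : nat -> R)
  (hx : is_partition p xs) (hy : is_partition q ys) :
  (forall A B : nat -> nat -> R,
     discrete_imprecise_copula p q xs ys A B ->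
     imprecise_copula (BL p q xs ys A) (BL p q xs ys B)) /\
  (forall A B : R -> R -> R,
     imprecise_copula A B ->
     discrete_imprecise_copula p q xs ys
       (fun i j => A (xs i) (ys j)) (fun i j => B (xs i) (ys j))).
Proof.
  split.
  - intros A B [H1 [H2 H3]]. split.
    + intros x Hx.
      destruct (BL_bound p q xs ys A hx hy
        ltac:(intros i Hi; destruct (H1 i Hi) as [? [? [? ?]]]; auto)
        ltac:(intros j Hj; destruct (H2 j Hj) as [? [? [? ?]]]; auto) x Hx)
        as [a1 [a2 [a3 a4]]].
      destruct (BL_bound p q xs ys B hx hy
        ltac:(intros i Hi; destruct (H1 i Hi) as [? [? [? ?]]]; auto)
        ltac:(intros j Hj; destruct (H2 j Hj) as [? [? [? ?]]]; auto) x Hx)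
        as [b1 [b2 [b3 b4]]].
      repeat split; assumption.
    + intros x1 x2 y1 y2 h1 h2 h3 h4 h5 h6. split; [|split; [|split]];
      apply BL_rect; auto; intros i1 i2 j1 j2 a b c d;
      destruct (H3 i1 i2 j1 j2 a b c d) as [? [? [? ?]]]; assumption.
  - intros A B [H1 H2].
    pose proof (part_range p xs hx) as Rx. pose proof (part_range q ys hy) as Ry.
    pose proof (part_mono p xs hx) as Mx. pose proof (part_mono q ys hy) as My.
    destruct hx as [x0 [x1 _]]. destruct hy as [y0 [y1 _]].
    split; [|split].
    + intros i Hi. rewrite y0, y1. destruct (H1 (xs i) (Rx i Hi)) as [? [? [? [? [? [? [? ?]]]]]]].
      repeat split; assumption.
    + intros j Hj. rewrite x0, x1. destruct (H1 (ys j) (Ry j Hj)) as [? [? [? [? [? [? [? ?]]]]]]].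
      repeat split; assumption.
    + intros i1 i2 j1 j2 a b c d.
      apply H2.
      * apply (Rx i1); lia.
      * apply Mx; lia.
      * apply (Rx i2); lia.
      * apply (Ry j1); lia.
      * apply My; lia.
      * apply (Ry j2); lia.
Qed.
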